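(* Let $h$ be a positive integer and let $S_1,\ldots,S_n$ be sets of positive integers. For each $i$ let $G_{S_i}$ denote the $\mathcal{G}$-value sequence of $\mathrm{Subtraction}(S_i)$, and suppose that there exist sequences $a_1,\ldots,a_n$ of non-negative integers such that, for every $i$, $G_{S_i}$ is the $h$-stair of $a_i$, i.e. $G_{S_i}(xh+r)=a_i(x)h+r$ for all integers $x\ge 0$ and all $r\in\{0,1,\ldots,h-1\}$. Then for every position $(x_1,\ldots,x_n)$ of the generalized cyclic Nimhoff $\mathrm{GCN}(h;S_1,\ldots,S_n)$, $$\mathcal{G}(x_1,\ldots,x_n)=\left(\bigoplus_{i=1}^n\left\lfloor \frac{G_{S_i}(x_i)}{h}\right\rfloor\right)h+\left(\sum_{i=1}^n x_i\right)\bmod h.$$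
   Context: All games are impartial two-player games under the normal play rule (the player making the last move wins). For a finite set $T\subset\mathbb{N}_0$, $\mathrm{mex}\,T=\min(\mathbb{N}_0\setminus T)$. The $\mathcal{G}$-value (Grundy value) of a position $G$ is defined recursively by $\mathcal{G}(G)=\mathrm{mex}\{\mathcal{G}(G')\mid G\to G'\}$, where $G\to G'$ means $G'$ is reachable from $G$ in one move. The nim-sum $m_1\oplus\cdots\oplus m_n$ of non-negative integers is binary addition without carry (bitwise XOR). For a set $S$ of positive integers, $\mathrm{Subtraction}(S)$ is the game played on a single heap of $x\ge 0$ tokens, where a move takes a heap of $x$ tokens to a heap of $x-s$ tokens for some $s\in S$ with $s\le x$; its $\mathcal{G}$-value sequence is $G_S(x)$, the $\mathcal{G}$-value of a heap of $x$ tokens, $x=0,1,2,\ldots$. The generalized cyclic Nimhoff $\mathrm{GCN}(h;S_1,\ldots,S_n)$ has as positions the $n$-tuples $(x_1,\ldots,x_n)$ of non-negative integers; from $(x_1,\ldots,x_n)$ the legal moves go to any $n$-tuple of non-negative integers of one of the following forms: (i) $(x_1,\ldots,x_i-s_i,\ldots,x_n)$ for some $i$ and some $s_i\in S_i$ (only coordinate $i$ changed); or (ii) $(x_1-s_1,\ldots,x_n-s_n)$ where $s_1,\ldots,s_n$ are non-negative integers with $0<\sum_{i=1}^n s_i<h$. *)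

(* Defs.v *)
From mathcomp Require Import all_boot.
From Stdlib Require Import PeanoNat.
Set Implicit Arguments. Unset Strict Implicit. Unset Printing Implicit Defensive.

Definition mex (s : seq nat) : nat := find (fun k => k \notin s) (iota 0 (size s).+1).

(* When the fuel exceeds a strictly decreasing measure,
   this is exactly the recursive definition G(p) = mex {G(p') | p -> p'}. *)
Fixpoint grundy_fuel (T : Type) (opts : T -> seq T) (k : nat) (p : T) : nat :=
  match k with
  | 0 => 0
  | k'.+1 => mex (map (grundy_fuel opts k') (opts p))
  end.

Definition nimsum (a b : nat) : nat := Nat.lxor a b.

Definition sub_opts (S : pred nat) (x : nat) : seq nat :=
  [seq x - s | s <- iota 1 x & S s].

(* G_S(x): options decrease the heap strictly, so fuel x.+1 suffices. *)
Definition GS (S : pred nat) (x : nat) : nat := grundy_fuel (sub_opts S) x.+1 x.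

(* positions are lists x of length n; S i is the subtraction set of coordinate i *)

Fixpoint boxes (x : seq nat) : seq (seq nat) :=
  match x with
  | [::] => [:: [::]]
  | a :: xs => [seq b :: t | b <- iota 0 a.+1, t <- boxes xs]
  end.

Definition gcn_opts (h : nat) (S : nat -> pred nat) (x : seq nat) : seq (seq nat) :=
  (* type (i): subtract s in S_i (s <= x_i) from coordinate i only *)
  [seq set_nth 0 x i (nth 0 x i - s)
     | i <- iota 0 (size x), s <- [seq s <- iota 1 (nth 0 x i) | S i s]]
  ++
  (* type (ii): subtract s_i >= 0 with s_i <= x_i and 0 < sum s_i < h *)
  [seq [seq p.1 - p.2 | p <- zip x t]
     | t <- boxes x & (0 < sumn t) && (sumn t < h)].

(* every option strictly decreases sumn x, so fuel (sumn x).+1 suffices *)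
Definition Ggcn (h : nat) (S : nat -> pred nat) (x : seq nat) : nat :=
  grundy_fuel (gcn_opts h S) (sumn x).+1 x.

(* Main.v *)
From HB Require Import structures.
Require Import Defs.
From mathcomp Require Import all_boot.
From Stdlib Require Import PeanoNat.
From mathcomp Require Import zify.

Lemma mex_spec (s : seq nat) v : v \notin s -> (forall u, u < v -> u \in s) -> mex s = v.
Proof.
move=> vn lt.
have vle : v <= size s.
  have := @uniq_leq_size _ (iota 0 v) s (iota_uniq 0 v).
  rewrite size_iota; apply=> u; rewrite mem_iota add0n => /andP[_]; exact: lt.
rewrite /mex -(subnKC vle) -addnS iotaD find_cat.
have -> : has (fun k => k \notin s) (iota 0 v) = false.
  apply/hasPn => u; rewrite mem_iota add0n => /andP[_ uv]; rewrite negbK; exact: lt.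
by rewrite size_iota add0n /= vn addn0.
Qed.

Lemma mex_exists (s : seq nat) : exists v, v \notin s /\ forall u, u < v -> u \in s.
Proof.
have ex : exists k, k \notin s.
  case hs: (has (fun k => k \notin s) (iota 0 (size s).+1)).
    by case/hasP: hs => k _ kn; exists k.
  have := @uniq_leq_size _ (iota 0 (size s).+1) s (iota_uniq 0 _).
  rewrite size_iota ltnn; move/hasPn: hs => hs.
  by move=> H; exfalso; have := H (fun u uin => negbNE (hs u uin)).
case: (ex_minnP ex) => m mn mmin; exists m; split=> // u um.
by apply/negPn/negP => /mmin; rewrite leqNgt um.
Qed.

Lemma mex_notin (s : seq nat) : mex s \notin s.
Proof. by case: (mex_exists s) => v [vn lt]; rewrite (@mex_spec s v vn lt). Qed.

Lemma mex_lt (s : seq nat) u : u < mex s -> u \in s.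
Proof. by case: (mex_exists s) => v [vn lt]; rewrite (@mex_spec s v vn lt); apply: lt. Qed.

Lemma fuel_eq (T : Type) (opts : T -> seq T) (m : T -> nat) :
  (forall p, all (fun q => m q < m p) (opts p)) ->
  forall k1 k2 p, m p < k1 -> m p < k2 -> grundy_fuel opts k1 p = grundy_fuel opts k2 p.
Proof.
move=> dec; elim=> [|k1 IH] [|k2] p //= h1 h2.
congr mex; have := dec p; elim: (opts p) => [|q l IHl] //= /andP[lt al].
rewrite IHl // (IH k2) //; exact: (leq_trans lt).
Qed.

Lemma bit_lt k x y : (forall j, k < j -> Nat.testbit x j = Nat.testbit y j) ->
  Nat.testbit x k = true -> Nat.testbit y k = false -> y < x.
Proof.
elim: k x y => [|k IH] x y hj hx hy.
- have e : x / 2 = y / 2.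
    apply: Nat.bits_inj => j; rewrite !Nat.div2_bits; exact: hj.
  rewrite Nat.bit0_odd in hx; rewrite Nat.bit0_odd in hy.
  have e' : Nat.div2 x = Nat.div2 y by rewrite !Nat.div2_div.
  have := Nat.div2_odd x; have := Nat.div2_odd y.
  rewrite hx hy e' /= => ey ex. lia.
- have lt : y / 2 < x / 2.
    apply: (IH); [move=> j kj; rewrite !Nat.div2_bits; apply: hj; done
                 | by rewrite Nat.div2_bits | by rewrite Nat.div2_bits].
  rewrite -!Nat.div2_div in lt.
  have := Nat.div2_odd x; have := Nat.div2_odd y.
  case: (Nat.odd x); case: (Nat.odd y) => /= ; lia.
Qed.

Lemma xor_cmp a D : D <> 0 ->
  (Nat.testbit a (Nat.log2 D) -> Nat.lxor a D < a) /\
  (~~ Nat.testbit a (Nat.log2 D) -> a < Nat.lxor a D).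
Proof.
move=> D0.
have agree : forall j, Nat.log2 D < j -> Nat.testbit a j = Nat.testbit (Nat.lxor a D) j.
  move=> j lj; rewrite Nat.lxor_spec (@Nat.bits_above_log2 D j); first by case: (Nat.testbit a j).
  by apply/ltP.
have bD := Nat.bit_log2 D D0.
split; move=> hb.
- apply: (@bit_lt _ _ _ agree hb); by rewrite Nat.lxor_spec hb bD.
- apply: (@bit_lt (Nat.log2 D)).
  + by move=> j lj; rewrite agree.
  + by rewrite Nat.lxor_spec bD; move: hb; case: (Nat.testbit a _).
  + by move: hb; case: (Nat.testbit a _).
Qed.

Lemma nimsumA : associative nimsum. Proof. by move=> a b c; rewrite /nimsum Nat.lxor_assoc. Qed.
Lemma nimsumC : commutative nimsum. Proof. by move=> a b; rewrite /nimsum Nat.lxor_comm. Qed.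
Lemma nim0s : left_id 0 nimsum. Proof. by move=> a; rewrite /nimsum Nat.lxor_0_l. Qed.
HB.instance Definition _ := Monoid.isComLaw.Build nat 0 nimsum nimsumA nimsumC nim0s.

Definition bx (n : nat) (F : nat -> nat) := \big[nimsum/0]_(j < n) F j.

Lemma bxS n F : bx n.+1 F = nimsum (bx n F) (F n).
Proof. by rewrite /bx big_ord_recr. Qed.

Lemma bx_eq n F G : (forall j, j < n -> F j = G j) -> bx n F = bx n G.
Proof. by move=> e; rewrite /bx; apply: eq_bigr => j _; apply: e. Qed.

Lemma bx_split n F G i : i < n -> (forall j, j < n -> j != i -> F j = G j) ->
  bx n G = nimsum (nimsum (bx n F) (F i)) (G i).
Proof.
elim: n => [|n IH] // ilt e; rewrite !bxS /nimsum.
case: (eqVneq i n) => [ein|ne].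
- subst i.
  rewrite (@bx_eq n G F); last first.
    move=> j jn; symmetry; apply: e; [exact: leqW | by rewrite neq_ltn jn].
  by rewrite (Nat.lxor_assoc _ (F n) (F n)) Nat.lxor_nilpotent Nat.lxor_0_r.
- have iln : i < n by rewrite ltn_neqAle ne -ltnS.
  rewrite (IH iln); last by move=> j jn; apply: e; apply: leqW.
  have en : F n = G n by apply: e; rewrite // eq_sym.
  rewrite /nimsum en.
  set a := bx n F; set b := F i; set c := G i; set d := G n.
  by rewrite !Nat.lxor_assoc (Nat.lxor_comm d (Nat.lxor b c)) Nat.lxor_assoc.
Qed.

Lemma bx_bit n F k : Nat.testbit (bx n F) k -> exists j, j < n /\ Nat.testbit (F j) k.
Proof.
elim: n => [|n IH]; first by rewrite /bx big_ord0 Nat.bits_0.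
rewrite bxS /nimsum Nat.lxor_spec.
case h1: (Nat.testbit (bx n F) k).
- by case: (IH h1) => j [jn hj] _; exists j; split => //; apply: leqW.
- by case h2: (Nat.testbit (F n) k) => // _; exists n.
Qed.

Lemma sub_opts_mem (S : pred nat) x y : y \in sub_opts S x -> exists s, [/\ S s, 0 < s, s <= x & y = x - s].
Proof.
by case/mapP => s; rewrite mem_filter mem_iota => /andP[Ss /andP[s1 sx]] ->; exists s; split => //; lia.
Qed.

Lemma GS_eq S x : GS S x = mex (map (GS S) (sub_opts S x)).
Proof.
rewrite {1}/GS /=; congr mex; apply/eq_in_map => y /sub_opts_mem [s [_ s0 sx ->]].
apply: (@fuel_eq _ (sub_opts S) id) => //; last by lia.
move=> p; apply/allP => q /sub_opts_mem [s' [_ ? ? ->]] /=; lia.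
Qed.

Lemma GS_neq (S : pred nat) x s : S s -> 0 < s -> s <= x -> GS S (x - s) != GS S x.
Proof.
move=> Ss s0 sx; apply/eqP => e.
have := mex_notin (map (GS S) (sub_opts S x)); rewrite -GS_eq -e.
rewrite map_f //; apply/mapP; exists s => //; rewrite mem_filter Ss mem_iota; apply/andP; split => //; lia.
Qed.

Lemma GS_reach (S : pred nat) x u : u < GS S x -> exists s, [/\ S s, 0 < s, s <= x & GS S (x - s) = u].
Proof.
rewrite GS_eq => /mex_lt /mapP [y /sub_opts_mem [s [Ss s0 sx ->]] e].
by exists s.
Qed.

Definition sub (x t : seq nat) := [seq p.1 - p.2 | p <- zip x t].

Lemma my_sumn_set_nth (x : seq nat) i v : i < size x ->
  sumn (set_nth 0 x i v) + nth 0 x i = sumn x + v.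
Proof.
elim: x i => [|a x IH] [|i] //= ilt; first lia.
have := IH i ilt; lia.
Qed.

Lemma size_set_nth' (x : seq nat) i v : i < size x -> size (set_nth 0 x i v) = size x.
Proof. by move=> il; rewrite size_set_nth; apply/maxn_idPr. Qed.

Lemma boxes_mem x t : t \in boxes x -> size t = size x /\ forall j, nth 0 t j <= nth 0 x j.
Proof.
elim: x t => [|a x IH] t.
- by rewrite /= inE => /eqP ->; split => // j; rewrite nth_nil.
- move/allpairsPdep => [b [t' [bin tin ->]]].
  have [sz le] := IH _ tin; split; first by rewrite /= sz.
  case=> [|j] /=; last exact: le.
  by rewrite mem_iota in bin; lia.
Qed.

Lemma mem_boxes x t : size t = size x -> (forall j, nth 0 t j <= nth 0 x j) -> t \in boxes x.
Proof.
elim: x t => [|a x IH] [|b t] // sz le.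
apply/allpairsPdep; exists b, t; split => //.
- by rewrite mem_iota; have := le 0; simpl; lia.
- by apply: IH; [by case: sz | move=> j; exact: (le j.+1)].
Qed.

Lemma my_nth_sub x t j : size t = size x -> nth 0 (sub x t) j = nth 0 x j - nth 0 t j.
Proof.
elim: x t j => [|a x IH] [|b t] [|j] //= sz; rewrite ?nth_nil //.
by apply: IH; case: sz.
Qed.

Lemma my_size_sub x t : size t = size x -> size (sub x t) = size x.
Proof. by move=> sz; rewrite size_map size_zip sz minnn. Qed.

Lemma my_sumn_sub x t : size t = size x -> (forall j, nth 0 t j <= nth 0 x j) ->
  sumn (sub x t) + sumn t = sumn x.
Proof.
elim: x t => [|a x IH] [|b t] //= sz le.
rewrite -/(sub x t). have := IH t (ltac:(by case: sz)) (fun j => le j.+1); have := le 0; simpl; lia.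
Qed.

Lemma exists_t h x d : d <= sumn [seq y %% h | y <- x] ->
  exists t, [/\ size t = size x, forall j, nth 0 t j <= nth 0 x j %% h & sumn t = d].
Proof.
elim: x d => [|a x IH] d /=.
- rewrite leqn0 => /eqP ->; exists [::]; split => // j; by rewrite nth_nil.
- move=> dle; have [t [sz le st]] := IH (d - minn d (a %% h)) ltac:(lia).
  exists (minn d (a %% h) :: t); split => /=; [by rewrite sz | | lia].
  case=> [|j] /=; [lia | exact: le].
Qed.

Lemma my_sumn_mod h x : sumn [seq y %% h | y <- x] = sumn x %[mod h].
Proof.
elim: x => //= a x IH.
by rewrite modnDml -modnDmr IH modnDmr.
Qed.

Lemma gcn_cases h S x y : y \in gcn_opts h S x ->
 (exists i s, [/\ i < size x, S i s, 0 < s, s <= nth 0 x i & y = set_nth 0 x i (nth 0 x i - s)]) \/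
 (exists t, [/\ t \in boxes x, 0 < sumn t, sumn t < h & y = sub x t]).
Proof.
rewrite mem_cat => /orP [/allpairsPdep [i [s [iin sin ->]]]|/mapP [t tin ->]].
- left; exists i, s; move: iin sin; rewrite mem_iota mem_filter mem_iota.
  move=> /andP [_ il] /andP [Ss /andP [s1 sx]]; split => //; lia.
- right; exists t; move: tin; rewrite mem_filter => /andP [/andP [t0 th] tin]; by split.
Qed.

Lemma gcn_dec h S x y : y \in gcn_opts h S x -> sumn y < sumn x /\ size y = size x.
Proof.
case/gcn_cases => [[i [s [il Ss s0 sx ->]]] | [t [tin t0 th ->]]].
- split; last exact: size_set_nth'.
  have := @my_sumn_set_nth x i (nth 0 x i - s) il; lia.
- have [sz le] := @boxes_mem x t tin; split; last exact: my_size_sub.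
  have := @my_sumn_sub x t sz le; lia.
Qed.

Lemma Ggcn_eq h S x : Ggcn h S x = mex (map (Ggcn h S) (gcn_opts h S x)).
Proof.
rewrite {1}/Ggcn /=; congr mex; apply/eq_in_map => y yin.
have [lt _] := @gcn_dec h S x y yin.
apply: (@fuel_eq _ (gcn_opts h S) sumn) => //.
move=> p; apply/allP => q qin; by case: (@gcn_dec h S p q qin).
Qed.

Definition Nv h n (S : nat -> pred nat) (y : seq nat) := bx n (fun i => GS (S i) (nth 0 y i) %/ h).
Definition fv h n S y := Nv h n S y * h + sumn y %% h.

Lemma fmod h N r : 0 < h -> r < h -> (N * h + r) %/ h = N /\ (N * h + r) %% h = r.
Proof. by move=> h0 rh; rewrite divnMDl // divn_small // addn0 modnMDl modn_small. Qed.

Lemma xor_cancel A b c : nimsum (nimsum A b) c = A -> b = c.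
Proof.
rewrite /nimsum Nat.lxor_assoc => e; apply: Nat.lxor_eq.
have := congr1 (Nat.lxor A) e; by rewrite -Nat.lxor_assoc !Nat.lxor_nilpotent Nat.lxor_0_l.
Qed.

Lemma sub_div h y t : 0 < h -> t <= y %% h -> (y - t) %/ h = y %/ h.
Proof.
move=> h0 tl; rewrite {1}(divn_eq y h) -addnBA // divnMDl // [(_ - t) %/ h]divn_small ?addn0 //.
have := ltn_pmod y h0; lia.
Qed.

Lemma main_step h n (S : nat -> pred nat) :
  0 < h ->
  (forall i y, i < n -> GS (S i) y = GS (S i) y %/ h * h + y %% h) ->
  (forall i y y', i < n -> y %/ h = y' %/ h -> GS (S i) y %/ h = GS (S i) y' %/ h) ->
  forall y, (forall z, sumn z < sumn y -> size z = n -> Ggcn h S z = fv h n S z) ->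
  size y = n -> Ggcn h S y = fv h n S y.
Proof.
move=> h0 Hdec Hq y IH szy.
have Emap : map (Ggcn h S) (gcn_opts h S y) = map (fv h n S) (gcn_opts h S y).
  apply/eq_in_map => z zin; have [lt sz] := @gcn_dec h S y z zin.
  by apply: IH => //; rewrite sz.
rewrite Ggcn_eq Emap; apply: mex_spec.
- apply/mapP => [[z zin e]].
  have [ey1 ey2] := @fmod h (Nv h n S y) (sumn y %% h) h0 (ltn_pmod _ h0).
  have [ez1 ez2] := @fmod h (Nv h n S z) (sumn z %% h) h0 (ltn_pmod _ h0).
  rewrite /fv in e.
  have eN : Nv h n S y = Nv h n S z by rewrite -ey1 -ez1 e.
  have eM : sumn y %% h = sumn z %% h by rewrite -ey2 -ez2 e.
  case: (@gcn_cases h S y z zin) => [[i [s [il Ss s0 sx ez]]] | [t [tin t0 th ez]]].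
  + have iln : i < n by rewrite -szy.
    have Hsp := @bx_split n (fun j => GS (S j) (nth 0 y j) %/ h)
                  (fun j => GS (S j) (nth 0 z j) %/ h) i iln.
    have zi : nth 0 z i = nth 0 y i - s by rewrite ez nth_set_nth /= eqxx.
    have Fi : GS (S i) (nth 0 y i) %/ h = GS (S i) (nth 0 y i - s) %/ h.
      rewrite -zi; apply: (@xor_cancel (Nv h n S y)); rewrite -Hsp; first by rewrite eN.
      by move=> j jn ne; rewrite ez nth_set_nth /= (negbTE ne).
    have ss := @my_sumn_set_nth y i (nth 0 y i - s) il; rewrite -ez in ss.
    have md : nth 0 y i = nth 0 y i - s %[mod h].
      apply/eqP; rewrite -(eqn_modDl (sumn y)); apply/eqP.
      by rewrite -modnDml eM modnDml ss.
    have := @GS_neq (S i) (nth 0 y i) s Ss s0 sx.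
    by rewrite (Hdec i (nth 0 y i - s) iln) (Hdec i (nth 0 y i) iln) -Fi md eqxx.
  + have [szt le] := @boxes_mem y t tin.
    have ss := @my_sumn_sub y t szt le; rewrite -ez in ss.
    have : sumn z + sumn t = sumn z + 0 %[mod h] by rewrite ss addn0 eM.
    move/eqP; rewrite eqn_modDl mod0n modn_small // => /eqP; lia.
- move=> u ult.
  have Rh : sumn y %% h < h := ltn_pmod _ h0.
  have ue : u = u %/ h * h + u %% h := divn_eq u h.
  have ch : u %% h < h := ltn_pmod u h0.
  have [fy1 fy2] := @fmod h (Nv h n S y) (sumn y %% h) h0 Rh.
  have BA : u %/ h <= Nv h n S y.
    by have := leq_div2r h (ltnW ult); rewrite /fv fy1.
  case: (ltngtP (u %/ h) (Nv h n S y)) => [BltA | AltB | BeqA]; [ | lia | ].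
  + set A := Nv h n S y in BltA fy1 fy2 BA *.
    set B := u %/ h in BltA ue BA *.
    set D := nimsum A B.
    have D0 : D <> 0.
      by move=> D0; have := Nat.lxor_eq _ _ D0 => eAB; rewrite eAB ltnn in BltA.
    have BD : B = Nat.lxor A D.
      by rewrite /D /nimsum -Nat.lxor_assoc Nat.lxor_nilpotent Nat.lxor_0_l.
    have [c1 c2] := @xor_cmp A D D0.
    have bA : Nat.testbit A (Nat.log2 D).
      apply/negPn/negP => nb; have := c2 nb; rewrite -BD => AB.
      by have := ltn_trans AB BltA; rewrite ltnn.
    have [i [iln bi]] := @bx_bit n (fun j => GS (S j) (nth 0 y j) %/ h) (Nat.log2 D) bA.
    set ai := GS (S i) (nth 0 y i) %/ h in bi.
    have [lt1 _] := @xor_cmp ai D D0.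
    have aiD := lt1 bi.
    set yi := nth 0 y i in ai bi aiD lt1 *.
    have il : i < size y by rewrite szy.
    pose rest := sumn (set_nth 0 y i 0).
    have srest : rest + yi = sumn y + 0 := @my_sumn_set_nth y i 0 il.
    pose r' := (u %% h + (h - rest %% h)) %% h.
    have r'h : r' < h := ltn_pmod _ h0.
    pose w := Nat.lxor ai D * h + r'.
    have [w1 w2] := @fmod h (Nat.lxor ai D) r' h0 r'h.
    have wlt : w < GS (S i) yi.
      apply: (@leq_trans ((Nat.lxor ai D).+1 * h)); first by rewrite mulSnr /w ltn_add2l.
      apply: (@leq_trans (ai * h)); first by rewrite leq_mul2r aiD orbT.
      by rewrite (Hdec i yi iln) leq_addr.
    have [s [Ss s0 sx ew]] := @GS_reach (S i) yi w wlt.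
    pose z := set_nth 0 y i (yi - s).
    apply/mapP; exists z.
      rewrite mem_cat; apply/orP; left; apply/allpairsPdep; exists i, s; split; last by [].
        by rewrite mem_iota add0n il.
      by rewrite mem_filter Ss mem_iota s0 add1n ltnS; exact: sx.
    have zi : nth 0 z i = yi - s by rewrite /z nth_set_nth /= eqxx.
    have Nz : Nv h n S z = B.
      rewrite /Nv (@bx_split n (fun j => GS (S j) (nth 0 y j) %/ h)
                  (fun j => GS (S j) (nth 0 z j) %/ h) i iln); last first.
        by move=> j jn ne; rewrite /z nth_set_nth /= (negbTE ne).
      rewrite -/(Nv h n S y) -/A -/ai /= zi ew w1 BD /nimsum.
      by rewrite Nat.lxor_assoc -(Nat.lxor_assoc ai ai D) Nat.lxor_nilpotent Nat.lxor_0_l.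
    have Mz : sumn z %% h = u %% h.
      have sz := @my_sumn_set_nth y i (yi - s) il.
      have Ez : sumn z = rest + (yi - s).
        by apply/eqP; rewrite -(eqn_add2r yi) /z sz -(addn0 (sumn y)) -srest addnAC.
      have mz : (yi - s) %% h = r'.
        have := @fmod h (GS (S i) (yi - s) %/ h) ((yi - s) %% h) h0 (ltn_pmod _ h0).
        by rewrite -Hdec // ew w2 => -[_ ->].
      rewrite Ez -modnDmr mz /r' modnDmr -modnDml.
      have rh : rest %% h <= h := ltnW (ltn_pmod _ h0).
      rewrite addnCA subnKC //.
      by rewrite modnDr modn_small.
    by rewrite /fv Nz Mz.
  + have cR : u %% h < sumn y %% h.
      by move: ult; rewrite {1}ue BeqA /fv ltn_add2l.
    set d := sumn y %% h - u %% h.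
    have dle : d <= sumn [seq v %% h | v <- y].
      apply: (@leq_trans (sumn y %% h)); first exact: leq_subr.
      by rewrite -my_sumn_mod leq_mod.
    have [t [szt tle st]] := @exists_t h y d dle.
    have tle' : forall j, nth 0 t j <= nth 0 y j := fun j => leq_trans (tle j) (leq_mod _ _).
    have tin : t \in boxes y := @mem_boxes y t szt tle'.
    have ss := @my_sumn_sub y t szt tle'.
    apply/mapP; exists (sub y t).
      rewrite mem_cat; apply/orP; right; apply/mapP; exists t => //.
      rewrite mem_filter tin st andbT; apply/andP; split; rewrite /d; lia.
    have Nz : Nv h n S (sub y t) = Nv h n S y.
      apply: bx_eq => j jn; rewrite my_nth_sub //; apply: Hq => //; exact: sub_div.
    have Mz : sumn (sub y t) %% h = u %% h.
      have dy := divn_eq (sumn y) h.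
      set Q := sumn y %/ h * h in dy.
      have -> : sumn (sub y t) = sumn y %/ h * h + u %% h by rewrite -/Q; lia.
      by rewrite modnMDl modn_small.
    by rewrite /fv Nz Mz {1}ue BeqA.
Qed.

Lemma main_ind h n (S : nat -> pred nat) :
  0 < h ->
  (forall i y, i < n -> GS (S i) y = GS (S i) y %/ h * h + y %% h) ->
  (forall i y y', i < n -> y %/ h = y' %/ h -> GS (S i) y %/ h = GS (S i) y' %/ h) ->
  forall m y, sumn y <= m -> size y = n -> Ggcn h S y = fv h n S y.
Proof.
move=> h0 Hdec Hq; elim=> [|m IH] y sy szy; apply: (@main_step h n S h0 Hdec Hq) => // z lt sz.
- lia.
- apply: IH => //; lia.
Qed.

Theorem theorem2p1 (h n : nat) (S : nat -> pred nat) :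
  0 < h ->
  (forall i, i < n -> forall s, S i s -> 0 < s) ->
  (forall i, i < n -> exists a : nat -> nat,
       forall q r, r < h -> GS (S i) (q * h + r) = a q * h + r) ->
  forall x : seq nat, size x = n ->
    Ggcn h S x =
      (\big[nimsum/0]_(i < n) (GS (S i) (nth 0 x i) %/ h)) * h + (sumn x) %% h.
Proof.
move=> h0 Spos Hst x sx.
have Hdec : forall i y, i < n -> GS (S i) y = GS (S i) y %/ h * h + y %% h.
  move=> i y il; case: (Hst i il) => a Ha.
  have e := Ha (y %/ h) (y %% h) (ltn_pmod y h0); rewrite -divn_eq in e.
  by rewrite e; have [-> _] := @fmod h (a (y %/ h)) (y %% h) h0 (ltn_pmod y h0).
have Hq : forall i y y', i < n -> y %/ h = y' %/ h -> GS (S i) y %/ h = GS (S i) y' %/ h.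
  move=> i y y' il e; case: (Hst i il) => a Ha.
  have E : forall v, GS (S i) v %/ h = a (v %/ h).
    move=> v; have := Ha (v %/ h) (v %% h) (ltn_pmod v h0); rewrite -divn_eq => ->.
    by have [-> _] := @fmod h (a (v %/ h)) (v %% h) h0 (ltn_pmod v h0).
  by rewrite !E e.
exact: (@main_ind h n S h0 Hdec Hq (sumn x) x (leqnn _) sx).
Qed.
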